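(* Backward proof search in $\mathsf{G4iSLt}$ is strongly terminating: there is no infinite sequence of sequents $S_0,S_1,S_2,\dots$ such that for every $k\ge 0$, $S_{k+1}$ is a premise of some instance of a rule of $\mathsf{G4iSLt}$ whose conclusion is $S_k$. Consequently, for every sequent, every tree obtained by repeatedly applying rules of $\mathsf{G4iSLt}$ backwards in any order is finite.
   Context: Formulas are built by the grammar $\varphi ::= p \mid \bot \mid \varphi\land\varphi \mid \varphi\lor\varphi \mid \varphi\to\varphi \mid \Box\varphi$, with $p$ ranging over a countably infinite set of propositional variables. For a multiset $\Gamma$, $\Box\Gamma=\{\Box\psi:\psi\in\Gamma\}$; a boxed formula is one of the form $\Box\psi$. A sequent is $\Gamma\Rightarrow\chi$ with $\Gamma$ a finite multiset of formulas and $\chi$ a formula. The sequent calculus $\mathsf{G4iSLt}$ has the following rules, where $p$ is a propositional variable and $\Phi$ always denotes a multiset containing no boxed formula: (⊥L) $\bot,\Gamma\Rightarrow\chi$ (no premise); (IdP) $\Gamma,p\Rightarrow p$ (no premise); (∧L) from $\Gamma,\varphi,\psi\Rightarrow\chi$ infer $\Gamma,\varphi\land\psi\Rightarrow\chi$; (∧R) from $\Gamma\Rightarrow\varphi$ and $\Gamma\Rightarrow\psi$ infer $\Gamma\Rightarrow\varphi\land\psi$; (∨L) from $\Gamma,\varphi\Rightarrow\chi$ and $\Gamma,\psi\Rightarrow\chi$ infer $\Gamma,\varphi\lor\psi\Rightarrow\chi$; (∨R$_i$), $i\in\{1,2\}$: from $\Gamma\Rightarrow\varphi_i$ infer $\Gamma\Rightarrow\varphi_1\lor\varphi_2$;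 (p→L) from $\Gamma,p,\varphi\Rightarrow\chi$ infer $\Gamma,p,p\to\varphi\Rightarrow\chi$; (→R) from $\Gamma,\varphi\Rightarrow\psi$ infer $\Gamma\Rightarrow\varphi\to\psi$; (□→L) from $\Phi,\Gamma,\psi,\Box\varphi\Rightarrow\varphi$ and $\Phi,\Box\Gamma,\psi\Rightarrow\chi$ infer $\Phi,\Box\Gamma,\Box\varphi\to\psi\Rightarrow\chi$; (SLtR) from $\Phi,\Gamma,\Box\varphi\Rightarrow\varphi$ infer $\Phi,\Box\Gamma\Rightarrow\Box\varphi$; (∧→L) from $\Gamma,\varphi\to(\psi\to\chi)\Rightarrow\delta$ infer $\Gamma,(\varphi\land\psi)\to\chi\Rightarrow\delta$; (∨→L) from $\Gamma,\varphi\to\chi,\psi\to\chi\Rightarrow\delta$ infer $\Gamma,(\varphi\lor\psi)\to\chi\Rightarrow\delta$; (→→L) from $\Gamma,\psi\to\chi\Rightarrow\varphi\to\psi$ and $\Gamma,\chi\Rightarrow\delta$ infer $\Gamma,(\varphi\to\psi)\to\chi\Rightarrow\delta$. *)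

(* Defs.v *)
From Stdlib Require Import List Permutation.
Import ListNotations.

Inductive form : Type :=
| Var : nat -> form
| Bot : form
| And : form -> form -> form
| Or  : form -> form -> form
| Imp : form -> form -> form
| Box : form -> form.

(** A sequent Γ ⇒ χ: Γ is a finite multiset, represented by a list
    (taken up to permutation, see [seq_equiv]). *)
Definition sequent : Type := (list form * form)%type.

Definition is_boxed (A : form) : Prop :=
  match A with Box _ => True | _ => False end.

Definition no_boxed (Phi : list form) : Prop := Forall (fun A => ~ is_boxed A) Phi.

Definition boxes (G : list form) : list form := map Box G.

Inductive rule_inst : list sequent -> sequent -> Prop :=
| BotL G c : rule_inst [] (Bot :: G, c)
| IdP G p : rule_inst [] (Var p :: G, Var p)
| AndL G a b c : rule_inst [(a :: b :: G, c)] (And a b :: G, c)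
| AndR G a b : rule_inst [(G, a); (G, b)] (G, And a b)
| OrL G a b c : rule_inst [(a :: G, c); (b :: G, c)] (Or a b :: G, c)
| OrR1 G a b : rule_inst [(G, a)] (G, Or a b)
| OrR2 G a b : rule_inst [(G, b)] (G, Or a b)
| AtomImpL G p a c :
    rule_inst [(Var p :: a :: G, c)] (Var p :: Imp (Var p) a :: G, c)
| ImpR G a b : rule_inst [(a :: G, b)] (G, Imp a b)
| BoxImpL Phi G a b c : no_boxed Phi ->
    rule_inst [(Phi ++ G ++ [b; Box a], a); (Phi ++ boxes G ++ [b], c)]
              (Phi ++ boxes G ++ [Imp (Box a) b], c)
| SLtR Phi G a : no_boxed Phi ->
    rule_inst [(Phi ++ G ++ [Box a], a)] (Phi ++ boxes G, Box a)
| AndImpL G a b c d :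
    rule_inst [(Imp a (Imp b c) :: G, d)] (Imp (And a b) c :: G, d)
| OrImpL G a b c d :
    rule_inst [(Imp a c :: Imp b c :: G, d)] (Imp (Or a b) c :: G, d)
| ImpImpL G a b c d :
    rule_inst [(Imp b c :: G, Imp a b); (c :: G, d)] (Imp (Imp a b) c :: G, d).

Definition seq_equiv (S T : sequent) : Prop :=
  Permutation (fst S) (fst T) /\ snd S = snd T.

Definition is_premise (S' S : sequent) : Prop :=
  exists ps C P, rule_inst ps C /\ In P ps /\ seq_equiv S C /\ seq_equiv S' P.

(* Main.v *)
Require Import Defs.
From Stdlib Require Import List Permutation.
From Stdlib Require Import Lia Arith.
Import ListNotations.

Fixpoint mu (f : form) : nat :=
  match f with
  | Var _ => 3
  | Bot => 3
  | And a b => 9 * mu a * mu b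
  | Or a b => 3 * mu a * mu b
  | Imp a b => 3 * mu a * mu b
  | Box a => 3 * mu a
  end.

Lemma mu_ge3 : forall f, 3 <= mu f.
Proof. induction f; simpl; nia. Qed.

Definition nu (f : form) : nat :=
  match f with Box a => mu a | _ => mu f end.

Lemma nu_le : forall f, nu f <= mu f.
Proof. destruct f; simpl; auto. pose proof (mu_ge3 f). lia. Qed.

Fixpoint sumnu (l : list form) : nat :=
  match l with [] => 0 | f :: l => nu f + sumnu l end.
Fixpoint summu (l : list form) : nat :=
  match l with [] => 0 | f :: l => mu f + summu l end.

Lemma sumnu_app : forall l1 l2, sumnu (l1 ++ l2) = sumnu l1 + sumnu l2.
Proof. induction l1; simpl; intros; try rewrite IHl1; lia. Qed.

Lemma sumnu_boxes : forall G, sumnu (boxes G) = summu G.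
Proof. induction G; simpl; auto. Qed.

Lemma sumnu_le : forall G, sumnu G <= summu G.
Proof. induction G; simpl; auto. pose proof (nu_le a). lia. Qed.

Lemma sumnu_perm : forall l1 l2, Permutation l1 l2 -> sumnu l1 = sumnu l2.
Proof. intros l1 l2 H; induction H; simpl; lia. Qed.

Definition meas (S : sequent) : nat := sumnu (fst S) + mu (snd S).

Lemma rule_dec : forall ps c P, rule_inst ps c -> In P ps -> meas P < meas c.
Proof.
  intros ps c P H Hin; destruct H; simpl in Hin;
  repeat (destruct Hin as [Hin|Hin]; [subst P|]); try contradiction;
  unfold meas; simpl;
  repeat rewrite ?sumnu_app, ?sumnu_boxes; simpl;
  repeat match goal with
  | |- context [mu ?x] =>
      lazymatch goal with
      | H : 3 <= mu x |- _ => fail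
      | _ => pose proof (mu_ge3 x)
      end
  end;
  try (pose proof (sumnu_le G));
  try (pose proof (nu_le a)); try (pose proof (nu_le b)); try (pose proof (nu_le c));
  first [nia | (assert (9 <= mu a * mu b) by nia;
     assert (9 * mu c <= mu a * mu b * mu c) by nia; nia)].
Qed.

Lemma premise_dec : forall S' S, is_premise S' S -> meas S' < meas S.
Proof.
  intros S' S [ps [C [P [Hr [Hin [[H1 H2] [H3 H4]]]]]]].
  pose proof (rule_dec _ _ _ Hr Hin).
  unfold meas in *. rewrite (sumnu_perm _ _ H1), (sumnu_perm _ _ H3), H2, H4. lia.
Qed.

Theorem mainTheorem15 :
  ~ exists f : nat -> sequent, forall k : nat, is_premise (f (S k)) (f k).
Proof.
  intros [f Hf].
  assert (forall n k, meas (f k) < n -> False).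
  { induction n; intros k Hk; [lia|].
    apply (IHn (S k)). pose proof (premise_dec _ _ (Hf k)). lia. }
  apply (H (S (meas (f 0))) 0). lia.
Qed.
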